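(* Assume the scores are produced by a symmetric transformation and the intervals $\mathcal{I}_1,\ldots,\mathcal{I}_L$ are fixed (do not depend on the data). Then: (i) (Joint distribution-freeness) Under $H_0$ (i.e. $Z_1,\ldots,Z_n$ i.i.d. with an arbitrary law $P_1$), $(T_{n,1},\ldots,T_{n,L})$ has the same distribution as $\mathbb{G}(\pi)$, where $\pi$ is a uniformly random permutation of $[n]$; in particular its joint distribution does not depend on $P_1$. (ii) (Pivotalness to changes) If every interval $\mathcal{I}_\ell$, $\ell\in[L]$, contains no changepoint, i.e. for each $\ell$ there is $k\in[K^*+1]$ with $\mathcal{I}_\ell\subset(\tau^*_{k-1},\tau^*_k]$, then the joint distribution of $(T_{n,1},\ldots,T_{n,L})$ under the true law $\mathbb{P}^*$ is the same as under $H_0$ (namely the law of $\mathbb{G}(\pi)$).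
   Context: Let $Z_1,\ldots,Z_n$ be independent random elements of a measurable space $\mathcal{Z}$, $\mathcal{D}=(Z_1,\ldots,Z_n)$, with joint law $\mathbb{P}^*$. Changepoint model: there are $K^*\ge0$ and integers $0=\tau^*_0<\tau^*_1<\cdots<\tau^*_{K^*}<\tau^*_{K^*+1}=n$ such that for each $k\in[K^*+1]$ the $Z_i$, $i\in(\tau^*_{k-1},\tau^*_k]$, are identically distributed with law $P^*_k$, and $P^*_{k+1}\ne P^*_k$ for $k\in[K^*]$. The null hypothesis $H_0$ is $K^*=0$. A measurable $\mathbb{S}:\mathcal{Z}\times\mathcal{Z}^n\to\mathbb{R}$ is a symmetric transformation if $\mathbb{S}(z;\mathcal{D})=\mathbb{S}(z;\mathcal{D}_\pi)$ for all $z$ and all permutations $\pi$ of $[n]$, where $\mathcal{D}_\pi=(Z_{\pi(1)},\ldots,Z_{\pi(n)})$. Scores: $S_i=\mathbb{S}(Z_i;\mathcal{D})+\epsilon e_i$ with fixed $\epsilon>0$ and $e_i$ i.i.d. $\mathcal{N}(0,1)$ independent of the data. Let $\mathcal{I}_1,\ldots,\mathcal{I}_L$ be nonempty subsets (intervals) of $\{1,\ldots,n\}$ (possibly overlapping). For $i\in\mathcal{I}_\ell$ the local rank is $R_{i,\ell}=|\{j\in\mathcal{I}_\ell:S_j\le S_i\}|$. An aggregation function $\mathbb{A}$ maps a finite vector of ranks to $\mathbb{R}$; $T_{n,\ell}=\mathbb{A}((R_{i,\ell})_{i\in\mathcal{I}_\ell})$, the ranks listed in increasing order of $i$. For a permutation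 $\pi$ of $[n]$ define $\mathbb{G}(\pi)\in\mathbb{R}^L$ by $\mathbb{G}(\pi)_\ell=\mathbb{A}\big((|\{j\in\mathcal{I}_\ell:\pi(j)\le\pi(i)\}|)_{i\in\mathcal{I}_\ell}\big)$. *)

(* Defs.v *)
From HB Require Import structures.
From mathcomp Require Import all_boot all_order all_algebra all_fingroup.
From mathcomp Require Import all_classical all_reals all_analysis.
Set Implicit Arguments. Unset Strict Implicit. Unset Printing Implicit Defensive.
Import Order.TTheory GRing.Theory Num.Theory.
Local Open Scope classical_set_scope.
Local Open Scope ring_scope.

(* Mutual independence of the 2n random elements Z_1..Z_n (values in T) and
   e_1..e_n (values in R): product rule for all measurable rectangles
   (taking some sets to be the whole space gives every subfamily). *)
Definition mutually_independent {R : realType} {dO d : measure_display}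
  {Omega : measurableType dO} {T : measurableType d} (n : nat)
  (P : probability Omega R) (X : 'I_n -> Omega -> T) (Y : 'I_n -> Omega -> R) :=
  forall (A : 'I_n -> set T) (B : 'I_n -> set R),
    (forall i, measurable (A i)) -> (forall i, measurable (B i)) ->
    P (\bigcap_(i in [set: 'I_n]) (X i @^-1` A i) `&`
       \bigcap_(i in [set: 'I_n]) (Y i @^-1` B i)) =
    ((\prod_(i < n) P (X i @^-1` A i)) * (\prod_(i < n) P (Y i @^-1` B i)))%E.

Definition dataset {dO d : measure_display} {Omega : measurableType dO}
  {T : measurableType d} (n : nat) (X : 'I_n -> Omega -> T) (w : Omega)
  : n.-tuple T := [tuple X i w | i < n].

Definition permute_tuple {T : Type} (n : nat) (pi : 'S_n) (D : n.-tuple T)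
  : n.-tuple T := [tuple tnth D (pi i) | i < n].

Definition symmetric_transformation {R : realType} {d : measure_display}
  {T : measurableType d} (n : nat) (S : T -> n.-tuple T -> R) :=
  measurable_fun [set: T * n.-tuple T] (fun p => S p.1 p.2) /\
  forall (z : T) (D : n.-tuple T) (pi : 'S_n), S z D = S z (permute_tuple pi D).

Definition score {R : realType} {dO d : measure_display}
  {Omega : measurableType dO} {T : measurableType d} (n : nat)
  (S : T -> n.-tuple T -> R) (eps : R)
  (X : 'I_n -> Omega -> T) (Y : 'I_n -> Omega -> R) (w : Omega) (i : 'I_n) : R :=
  S (X i w) (dataset X w) + eps * Y i w.

Definition local_rank {R : realType} (n : nat) (I : {set 'I_n})
  (s : 'I_n -> R) (i : 'I_n) : nat :=
  #|[set j in I | s j <= s i]|.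

(* T_{n,l} = A((R_{i,l})_{i in I_l}), ranks listed in increasing order of i
   (enum of a set of ordinals is increasing). *)
Definition stat_vector {R : realType} {dO d : measure_display}
  {Omega : measurableType dO} {T : measurableType d} (n L : nat)
  (S : T -> n.-tuple T -> R) (eps : R)
  (X : 'I_n -> Omega -> T) (Y : 'I_n -> Omega -> R)
  (I : 'I_L -> {set 'I_n}) (Agg : seq nat -> R) (w : Omega) : 'I_L -> R :=
  fun l => Agg [seq local_rank (I l) (score S eps X Y w) i | i <- enum (I l)].

Definition Gperm {R : realType} (n L : nat) (I : 'I_L -> {set 'I_n})
  (Agg : seq nat -> R) (pi : 'S_n) : 'I_L -> R :=
  fun l => Agg [seq #|[set j in I l | (pi j <= pi i)%N]| | i <- enum (I l)].

Definition uniform_perm_law {R : realType} (n L : nat) (I : 'I_L -> {set 'I_n})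
  (Agg : seq nat -> R) (B : set ('I_L -> R)) : \bar R :=
  ((#|[set pi : 'S_n | `[< B (Gperm I Agg pi) >] ]|)%:R / (n`!)%:R)%:E.

(* Main.v *)
Require Import Defs.
From HB Require Import structures.
From mathcomp Require Import all_boot all_order all_algebra all_fingroup.
From mathcomp Require Import all_classical all_reals all_analysis.
From mathcomp Require Import measurable_realfun.
Import Order.TTheory GRing.Theory Num.Theory.
Local Open Scope classical_set_scope.
Local Open Scope ring_scope.
Section Rect.
Context (R : realType) (d : measure_display) (Z : measurableType d) (n : nat).
Local Notation U := (n.-tuple (Z * R)%type).

Definition rect (A : 'I_n -> set Z) (B : 'I_n -> set R) : set U :=
  [set v | forall i, A i (tnth v i).1 /\ B i (tnth v i).2].

Definition rects : set (set U) :=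
  [set C | exists A B, (forall i, measurable (A i)) /\ (forall i, measurable (B i)) /\ C = rect A B].

Lemma rect_bigcap A B : rect A B = \big[setI/setT]_(i < n) ((fun v => tnth v i) @^-1` (A i `*` B i)).
Proof.
apply/seteqP; split => v.
  move=> H; rewrite -bigcap_seq /= => i _; exact: H.
rewrite -bigcap_seq => H i; apply: (H i); exact: mem_index_enum.
Qed.

Lemma rect_measurable A B : (forall i, measurable (A i)) -> (forall i, measurable (B i)) ->
  measurable (rect A B).
Proof.
move=> mA mB; rewrite rect_bigcap; apply: bigsetI_measurable => i _.
rewrite -[X in measurable X]setTI; apply: measurable_tnth => //.
exact: measurableX.
Qed.

Lemma rects_setI : setI_closed rects.
Proof.
move=> _ _ [A [B [mA [mB ->]]]] [A' [B' [mA' [mB' ->]]]].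
exists (fun i => A i `&` A' i), (fun i => B i `&` B' i); split; [|split].
- by move=> i; apply: measurableI.
- by move=> i; apply: measurableI.
apply/seteqP; split => v /=.
  by move=> [H H'] i; have [? ?] := H i; have [? ?] := H' i.
by move=> H; split => i; have [[? ?] [? ?]] := H i.
Qed.

Lemma rectT : rect (fun=> setT) (fun=> setT) = setT.
Proof. by apply/seteqP; split. Qed.

Lemma measurable_rects : @measurable _ U = <<s rects >>.
Proof.
apply/seteqP; split; last first.
  apply: smallest_sub; first exact: sigma_algebra_measurable.
  by move=> _ [A [B [mA [mB ->]]]]; exact: rect_measurable.
apply: smallest_sub; first exact: smallest_sigma_algebra.
rewrite -bigcup_seq => C [i _ [D mD <-]].
rewrite setTI.
suff : <<s [set A `*` B | A in @measurable _ Z & B in @measurable _ R] >> `<=`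
   [set D | <<s rects >> ((fun v : U => tnth v i) @^-1` D)].
  by apply; move: mD; rewrite measurable_prod_measurableType.
apply: smallest_sub.
  split => /=.
  - by rewrite preimage_set0; exact: sigma_algebra0.
  - move=> A HA; rewrite setTD -preimage_setC -setTD.
    exact: sigma_algebraCD.
  - move=> F HF; rewrite preimage_bigcup.
    by apply: sigma_algebra_bigcup.
move=> _ [A mA [B mB <-]] /=.

apply: sub_sigma_algebra.
exists (fun j => if j == i then A else setT), (fun j => if j == i then B else setT).
split; [by move=> j; case: ifP|split; first by move=> j; case: ifP].
apply/seteqP; split => v /=.
  move=> [HA HB] j; case: eqP => [->//|]; done.
by move=> H; have := H i; rewrite eqxx.
Qed.

Lemma rect_unique (R' : realType) (m1 m2 : {measure set U -> \bar R'}) :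
  (m1 setT < +oo)%E ->
  (forall A B, (forall i, measurable (A i)) -> (forall i, measurable (B i)) ->
     m1 (rect A B) = m2 (rect A B)) ->
  forall C, measurable C -> m1 C = m2 C.
Proof.
move=> m1oo H C mC.
apply: (measure_unique rects (fun=> setT)) => //.
- exact: measurable_rects.
- exact: rects_setI.
- move=> _; exists (fun=> setT), (fun=> setT); split => //; split => //.
  by rewrite rectT.
- by rewrite bigcup_const.
- by move=> _ [A [B [mA [mB ->]]]]; apply: H.
Qed.

End Rect.
Arguments rect {R d Z n}.
Arguments rect_unique {R d Z n R'}.
Section Comb.
Context (n : nat) (seg : 'I_n -> nat).

Definition key_lt (s : 'S_n) (a b : 'I_n) : bool :=
  (seg a < seg b)%N || ((seg a == seg b) && (s a < s b)%N).

Lemma key_lt_irr s a : key_lt s a a = false.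
Proof. by rewrite /key_lt ltnn eqxx ltnn. Qed.

Lemma key_lt_trans s x a b : key_lt s x a -> key_lt s a b -> key_lt s x b.
Proof.
rewrite /key_lt => /orP[h1|/andP[/eqP e1 h1]] /orP[h2|/andP[/eqP e2 h2]].
- by rewrite (ltn_trans h1 h2).
- by rewrite -e2 h1.
- by rewrite e1 h2.
- by rewrite e1 e2 eqxx (ltn_trans h1 h2) orbT.
Qed.

Lemma key_lt_total s a b : a != b -> key_lt s a b || key_lt s b a.
Proof.
move=> ab; rewrite /key_lt.
case: (ltngtP (seg a) (seg b)) => //= e.
have : s a != s b by apply: contra ab => /eqP /perm_inj ->.
by rewrite neq_ltn.
Qed.

Lemma key_lt_same s a b : seg a = seg b -> key_lt s a b = (s a < s b)%N.
Proof. by move=> e; rewrite /key_lt e ltnn eqxx. Qed.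

Definition kap s a := #|[set b | key_lt s b a]%SET|.

Lemma kap_lt s a : (kap s a < n)%N.
Proof.
rewrite /kap -[X in (_ < X)%N]card_ord -cardsT; apply: proper_card; apply/properP.
split; first exact: finset.subsetT.
by exists a; rewrite ?inE ?key_lt_irr.
Qed.

Lemma kap_mono s a b : key_lt s a b -> (kap s a < kap s b)%N.
Proof.
move=> ab; apply: proper_card; apply/properP; split.
  by apply/fintype.subsetP => x; rewrite !inE => /key_lt_trans; apply.
by exists a; rewrite !inE ?key_lt_irr.
Qed.

Lemma kap_inj s : injective (fun a => Ordinal (kap_lt s a)).
Proof.
move=> a b /(congr1 val) /= e; apply/eqP; apply/negPn/negP => ab.
by case/orP: (key_lt_total s _ _ ab) => /(kap_mono s); rewrite e ltnn.
Qed.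

Definition kp s : 'S_n := perm (kap_inj s).

Lemma kpE s a : (kp s a : nat) = kap s a.
Proof. by rewrite permE. Qed.

Lemma kap_ltE s a b : (kap s a < kap s b)%N = key_lt s a b.
Proof.
apply/idP/idP; last exact: kap_mono.
move=> h; have [eab|ab] := eqVneq a b; first by rewrite eab ltnn in h.
case/orP: (key_lt_total s _ _ ab) => // /(kap_mono s) h'.
by have := ltn_trans h h'; rewrite ltnn.
Qed.

Lemma kap_lb s a : (#|[set x | (seg x < seg a)%N]%SET| <= kap s a)%N.
Proof.
apply: subset_leq_card; apply/fintype.subsetP => x; rewrite !inE => h.
by rewrite /key_lt h.
Qed.

Lemma kap_ub s a : (kap s a < #|[set x | (seg x <= seg a)%N]%SET|)%N.
Proof.
apply: proper_card; apply/properP; split.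
  apply/fintype.subsetP => x; rewrite !inE /key_lt => /orP[/ltnW //|/andP[/eqP -> _]].
  exact: leqnn.
by exists a; rewrite !inE ?leqnn ?key_lt_irr.
Qed.

Lemma seg_card_mono a b : (seg b < seg a)%N ->
  (#|[set x | (seg x <= seg b)%N]%SET| <= #|[set x | (seg x < seg a)%N]%SET|)%N.
Proof.
move=> ba; apply: subset_leq_card; apply/fintype.subsetP => x; rewrite !inE => h.
exact: leq_ltn_trans h ba.
Qed.

Lemma kap_seg s s' a b : kap s a = kap s' b -> seg a = seg b.
Proof.
move=> e; case: (ltngtP (seg a) (seg b)) => // h.
- have h1 := leq_trans (kap_ub s a) (seg_card_mono _ _ h).
  by have := leq_trans h1 (kap_lb s' b); rewrite e ltnn.
- have h1 := leq_trans (kap_ub s' b) (seg_card_mono _ _ h).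
  by have := leq_trans h1 (kap_lb s a); rewrite e ltnn.
Qed.

Lemma tau_exists (s s' : 'S_n) : exists t : 'S_n,
  (forall i, seg (t i) = seg i) /\
  (forall a c, seg a = seg c -> (s' (t a) <= s' (t c))%N = (s a <= s c)%N).
Proof.
set t : 'S_n := (kp s * (kp s')^-1)%g.
have tE a : kap s' (t a) = kap s a.
  rewrite -(kpE s' (t a)) -(kpE s a).
  by rewrite /t permM permKV.
have tseg a : seg (t a) = seg a.
  by apply/esym; apply: (kap_seg s s'); rewrite tE.
exists t; split; first exact: tseg.
move=> a c ac.
have ltE x y : seg x = seg y -> (s' (t x) < s' (t y))%N = (s x < s y)%N.
  move=> xy.
  rewrite -(key_lt_same s' (t x) (t y)); last by rewrite !tseg.
  by rewrite -kap_ltE (tE x) (tE y) kap_ltE key_lt_same.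
by rewrite leqNgt [RHS]leqNgt ltE.
Qed.
End Comb.
Section Avg.
Context (R : realType) (n : nat) (seg : 'I_n -> nat) (pr : 'S_n -> R) (b : 'S_n -> bool).

Definition inG (r : 'S_n) : bool := [forall i, seg (r i) == seg i].

Lemma sum_b_card : \sum_(s : 'S_n) ((b s)%:R : R) = (#|[set s | b s]%SET|)%:R.
Proof.
have -> : \sum_(s : 'S_n) ((b s)%:R : R) = \sum_(s in [set s | b s]%SET) (1 : R).
  by rewrite [RHS]big_mkcond /=; apply: eq_bigr => s _; rewrite inE; case: (b s).
by rewrite sumr_const.
Qed.

Lemma avg :
  \sum_s pr s = 1 ->
  (forall r s, inG r -> pr (r * s)%g = pr s) ->
  (forall s s', \sum_(r | inG r) ((b (r * s)%g)%:R : R) = \sum_(r | inG r) (b (r * s')%g)%:R) ->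
  \sum_s (b s)%:R * pr s = (\sum_s ((b s)%:R : R)) / (n`!)%:R.
Proof.
move=> pr1 prG hc.
set T := \sum_s (b s)%:R * pr s.
set N := \sum_s ((b s)%:R : R).
set g := \sum_(r | inG r) (1 : R).
set c1 := \sum_(r | inG r) ((b (r * 1)%g)%:R : R).
have inG1 : inG 1 by apply/forallP => i; rewrite perm1.
have g0 : g != 0.
  rewrite /g (bigD1 1%g) //= gt_eqF // ltr_pwDl //.
  by apply: sumr_ge0 => r _.
have step1 : g * T = c1.
  have -> : g * T = \sum_(r | inG r) \sum_s (b (r * s)%g)%:R * pr s.
    rewrite /g mulr_suml; apply: eq_bigr => r hr; rewrite mul1r /T.
    rewrite (reindex_inj (mulgI r)) /=; apply: eq_bigr => s _.
    by rewrite prG.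
  rewrite exchange_big /=.
  have -> : \sum_s \sum_(r | inG r) (b (r * s)%g)%:R * pr s = \sum_s c1 * pr s.
    apply: eq_bigr => s _; rewrite -mulr_suml; congr (_ * _).
    exact: hc.
  by rewrite -mulr_sumr pr1 mulr1.
have step2 : (n`!)%:R * c1 = g * N.
  have -> : (n`!)%:R * c1 = \sum_(s : 'S_n) c1.
    by rewrite sumr_const card_Sn mulr_natl.
  have -> : \sum_(s : 'S_n) c1 = \sum_(s : 'S_n) \sum_(r | inG r) (b (r * s)%g)%:R.
    by apply: eq_bigr => s _; rewrite (hc s 1%g).
  rewrite exchange_big /= /g mulr_suml; apply: eq_bigr => r _.
  by rewrite mul1r /N [RHS](reindex_inj (mulgI r)).
have nf0 : (n`!)%:R != 0 :> R by rewrite pnatr_eq0 -lt0n fact_gt0.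
have h : (n`!)%:R * (g * T) = (n`!)%:R * (g * (N / (n`!)%:R)).
  rewrite step1 step2 mulrCA; congr (g * _).
  by rewrite mulrC divfK.
exact: (mulfI g0 (mulfI nf0 h)).
Qed.

End Avg.
Section Main.
Context (R : realType) (dO d : measure_display)
  (Omega : measurableType dO) (P : probability Omega R)
  (Z : measurableType d) (n : nat)
  (X : 'I_n -> Omega -> Z) (e : 'I_n -> Omega -> R)
  (hX : forall i, measurable_fun [set: Omega] (X i))
  (he : forall i, measurable_fun [set: Omega] (e i))
  (hind : mutually_independent P X e)
  (hgauss : forall i (A : set R), measurable A ->
     P (e i @^-1` A) = normal_prob 0 1 A)
  (eps : R) (heps : 0 < eps)
  (S : Z -> n.-tuple Z -> R) (hS : symmetric_transformation S).

Local Notation U := (n.-tuple (Z * R)%type).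

Definition W (w : Omega) : U := [tuple (X i w, e i w) | i < n].

Lemma mW : measurable_fun setT W.
Proof.
apply/measurable_fun_tnthP => i.
rewrite (_ : _ \o _ = fun w => (X i w, e i w)); last first.
  by apply/funext => w /=; rewrite tnth_mktuple.
exact: measurable_fun_pair.
Qed.

Definition law : {measure set U -> \bar R} :=
  ltac:(refine (pushforward P W : {measure set U -> \bar R}); exact mW).

Lemma lawE C : law C = P (W @^-1` C). Proof. by []. Qed.

Lemma lawT : law setT = 1%E.
Proof. by rewrite lawE preimage_setT probability_setT. Qed.

Lemma law_rect A B : (forall i, measurable (A i)) -> (forall i, measurable (B i)) ->
  law (rect A B) = ((\prod_(i < n) P (X i @^-1` A i)) * (\prod_(i < n) P (e i @^-1` B i)))%E.
Proof.
move=> mA mB; rewrite lawE -hind//; congr (P _).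
apply/seteqP; split => w /=.
  move=> H; split => i _ /=; have := H i; rewrite tnth_mktuple /=; tauto.
move=> [H1 H2] i; rewrite tnth_mktuple /=; split; [exact: H1|exact: H2].
Qed.

Definition fstt (v : U) : n.-tuple Z := [tuple (tnth v i).1 | i < n].
Definition sc (v : U) (i : 'I_n) : R := S (tnth v i).1 (fstt v) + eps * (tnth v i).2.

Lemma score_W w i : score S eps X e w i = sc (W w) i.
Proof.
rewrite /score /sc tnth_mktuple /=; congr (S _ _ + _).
by apply: eq_from_tnth => j; rewrite !tnth_mktuple.
Qed.

Lemma mfst_tnth i : measurable_fun [set: U] (fun v : U => (tnth v i).1).
Proof. exact: measurableT_comp (measurable_tnth i). Qed.

Lemma msnd_tnth i : measurable_fun [set: U] (fun v : U => (tnth v i).2).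
Proof. exact: measurableT_comp (measurable_tnth i). Qed.

Lemma mfstt : measurable_fun [set: U] fstt.
Proof.
apply/measurable_fun_tnthP => i.
rewrite (_ : _ \o _ = fun v : U => (tnth v i).1); first exact: mfst_tnth.
by apply/funext => v /=; rewrite tnth_mktuple.
Qed.

Lemma msc i : measurable_fun [set: U] (fun v => sc v i).
Proof.
apply: measurable_funD.
  exact: (measurableT_comp hS.1 (measurable_fun_pair (mfst_tnth i) mfstt)).
apply: measurable_funM; first exact: measurable_cst.
exact: msnd_tnth.
Qed.
Definition Psi (i : 'I_n) (p : U * R) : U :=
  [tuple if k == i then ((tnth p.1 k).1, p.2) else tnth p.1 k | k < n].

Lemma mPsi i : measurable_fun [set: U * R] (Psi i).
Proof.
apply/measurable_fun_tnthP => k.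
rewrite (_ : _ \o _ = fun p : U * R => if k == i then ((tnth p.1 k).1, p.2) else tnth p.1 k); last first.
  by apply/funext => p /=; rewrite tnth_mktuple.
case: (k == i).
  apply: measurable_fun_pair => //.
  exact: (measurableT_comp (mfst_tnth k) measurable_fst).
exact: (measurableT_comp (measurable_tnth k) measurable_fst).
Qed.

Definition Nrm (A : set R) : \bar R := normal_prob (0:R) 1 A.

Let Nrm0 : Nrm set0 = 0%E. Proof. exact: (@measure0 _ _ _ (normal_prob (0:R) 1)). Qed.
Let Nrm_ge0 A : (0 <= Nrm A)%E. Proof. exact: (@measure_ge0 _ _ _ (normal_prob (0:R) 1)). Qed.
Let Nrm_sadd : semi_sigma_additive Nrm.
Proof. exact: (@measure_semi_sigma_additive _ _ _ (normal_prob (0:R) 1)). Qed.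
HB.instance Definition _ := isMeasure.Build _ _ _ Nrm Nrm0 Nrm_ge0 Nrm_sadd.
Let NrmT : Nrm setT = 1%E. Proof. exact: (@probability_setT _ _ _ (normal_prob (0:R) 1)). Qed.
HB.instance Definition _ := @Measure_isProbability.Build _ _ R Nrm NrmT.

Definition lawN : {measure set (U * R)%type -> \bar R} := (law \x Nrm)%E.

Definition lawPsi i : {measure set U -> \bar R} :=
  ltac:(refine (pushforward lawN (Psi i) : {measure set U -> \bar R}); exact: mPsi).

Lemma lawPsiE i C : lawPsi i C = lawN (Psi i @^-1` C). Proof. by []. Qed.

Lemma law_Psi i C : measurable C -> law C = lawN (Psi i @^-1` C).
Proof.
move=> mC; rewrite -lawPsiE; move: C mC; apply: rect_unique.
  by rewrite lawT ltry.
move=> A B mA mB; rewrite lawPsiE.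
pose B' k := if k == i then setT else B k.
have mB' k : measurable (B' k) by rewrite /B'; case: ifP.
have -> : Psi i @^-1` rect A B = rect A B' `*` B i.
  apply/seteqP; split => -[v t] /=.
    move=> H; split => [k|].
      have := H k; rewrite /B' tnth_mktuple; case: eqP => [->|_] //=; tauto.
    by have := H i; rewrite tnth_mktuple eqxx /=; tauto.
  move=> [H Ht] k; rewrite tnth_mktuple; have := H k; rewrite /B'.
  by case: eqP => [->|_] //=; tauto.
have -> : lawN (rect A B' `*` B i) = (law (rect A B') * Nrm (B i))%E.
  by apply: product_measure1E => //; exact: rect_measurable.
rewrite !law_rect// -muleA; congr (_ * _)%E.
rewrite (bigD1 i)//= [in RHS](bigD1 i)//= /B' eqxx preimage_setT probability_setT mul1e.
rewrite muleC; congr (_ * _)%E; last by rewrite /Nrm hgauss.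
by apply: eq_bigr => k /negbTE ->.
Qed.

Lemma mbool (f : U -> bool) : measurable_fun setT f -> measurable [set v | f v].
Proof.
move=> mf; have := mf measurableT [set true] I; rewrite setTI.
suff -> : [set v | f v] = f @^-1` [set true] by [].
by apply/seteqP; split => v /=.
Qed.

Lemma fstt_Psi i v t : fstt (Psi i (v, t)) = fstt v.
Proof.
apply: eq_from_tnth => k; rewrite !tnth_mktuple /=.
by case: eqP => [->|].
Qed.

Lemma sc_Psi_i i v t : sc (Psi i (v, t)) i = S (tnth v i).1 (fstt v) + eps * t.
Proof. by rewrite /sc fstt_Psi tnth_mktuple eqxx. Qed.

Lemma sc_Psi_j i j v t : j != i -> sc (Psi i (v, t)) j = sc v j.
Proof. by move=> /negbTE ji; rewrite /sc fstt_Psi tnth_mktuple ji. Qed.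

Lemma Nrm1 c : Nrm [set c] = 0%E.
Proof.
rewrite /Nrm; apply: (@normal_prob_dominates R 0 1 [set c]); last 2 first.
- exact: measurable_set1.
- by [].
by apply/measure0_null_setP; [exact: measurable_set1|exact: lebesgue_measure_set1].
Qed.

Lemma mtie i j : measurable [set v : U | sc v i = sc v j].
Proof.
have := mbool _ (measurable_fun_eqr (msc i) (msc j)).
suff -> : [set v : U | sc v i = sc v j] = [set v | sc v i == sc v j] by [].
by apply/seteqP; split => v /= /eqP.
Qed.

Lemma tie_null i j : i != j -> law [set v : U | sc v i = sc v j] = 0%E.
Proof.
move=> ij; rewrite (law_Psi i); last exact: mtie.
rewrite /lawN /product_measure1.
apply: integral0_eq => v _ /=.
rewrite (_ : xsection _ v = [set (sc v j - S (tnth v i).1 (fstt v)) / eps]) ?Nrm1//.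
apply/seteqP; split => t /=.
  rewrite /xsection /= inE /= sc_Psi_i sc_Psi_j 1?eq_sym// => <-.
  by rewrite addrAC subrr add0r mulrC mulKf// gt_eqF.
move=> ->; rewrite /xsection /= inE /= sc_Psi_i sc_Psi_j 1?eq_sym//.
by rewrite mulrC divfK ?gt_eqF// addrC subrK.
Qed.

Definition permU (r : 'S_n) (v : U) : U := [tuple tnth v (r k) | k < n].

Lemma mpermU r : measurable_fun setT (permU r).
Proof.
apply/measurable_fun_tnthP => k.
rewrite (_ : _ \o _ = fun v : U => tnth v (r k)); first exact: measurable_tnth.
by apply/funext => v /=; rewrite tnth_mktuple.
Qed.

Definition lawP r : {measure set U -> \bar R} :=
  ltac:(refine (pushforward law (permU r) : {measure set U -> \bar R}); exact: mpermU).

Lemma lawPE r C : lawP r C = law (permU r @^-1` C). Proof. by []. Qed.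

Lemma law_perm (seg : 'I_n -> nat)
  (hseg : forall i j, seg i = seg j -> forall A, measurable A -> P (X i @^-1` A) = P (X j @^-1` A))
  (r : 'S_n) : (forall i, seg (r i) = seg i) ->
  forall C, measurable C -> law (permU r @^-1` C) = law C.
Proof.
move=> hr C mC; rewrite -lawPE; apply/esym; move: C mC; apply: rect_unique.
  by rewrite lawT ltry.
move=> A B mA mB; rewrite lawPE.
have -> : permU r @^-1` rect A B = rect (fun j => A ((r^-1)%g j)) (fun j => B ((r^-1)%g j)).
  apply/seteqP; split => v /= H k.
    by have := H ((r^-1)%g k); rewrite tnth_mktuple permKV.
  by rewrite tnth_mktuple; have := H (r k); rewrite permK.
rewrite !law_rect//; congr (_ * _)%E.
  rewrite [RHS](reindex_inj (@perm_inj _ r)) /=; apply: eq_bigr => k _.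
  by rewrite permK; apply: hseg.
rewrite [RHS](reindex_inj (@perm_inj _ r)) /=; apply: eq_bigr => k _.
by rewrite permK !hgauss.
Qed.

Lemma sc_perm r v k : sc (permU r v) k = sc v (r k).
Proof.
rewrite /sc tnth_mktuple; congr (_ + _).
rewrite (hS.2 _ (fstt v) r); congr (S _ _).
by apply: eq_from_tnth => j; rewrite !tnth_mktuple.
Qed.

Definition Cm (M : {ffun 'I_n * 'I_n -> bool}) : set U :=
  [set v | forall i j, (sc v i <= sc v j) = M (i, j)].

Definition Mat (s : 'S_n) : {ffun 'I_n * 'I_n -> bool} :=
  [ffun p => (s p.1 <= s p.2)%N].

Lemma memI (I0 : choiceType) (s : seq I0) (Q : pred I0) (F : I0 -> set U) v :
  (\big[setI/setT]_(i <- s | Q i) F i) v <-> (forall i, i \in s -> Q i -> F i v).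
Proof.
rewrite -bigcap_seq_cond; split => [H i si Qi|H i /andP[si Qi]].
  by apply: H; rewrite /= si Qi.
exact: H.
Qed.

Lemma mle i j : measurable [set v : U | sc v i <= sc v j].
Proof. exact: (mbool _ (measurable_fun_ler (msc i) (msc j))). Qed.

Lemma mCm M : measurable (Cm M).
Proof.
have -> : Cm M = \big[setI/setT]_(i <- index_enum 'I_n) \big[setI/setT]_(j <- index_enum 'I_n)
   (if M (i, j) then [set v : U | sc v i <= sc v j] else ~` [set v : U | sc v i <= sc v j]).
  apply/seteqP; split => v.
    move=> H; apply/memI => i _ _; apply/memI => j _ _.
    rewrite -(H i j); case: ifP => h; first exact: h.
    by move=> h'; rewrite h' in h.
  move/memI => H i j; have /memI/(_ j (mem_index_enum _) isT) := H i (mem_index_enum _) isT.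
  by case: (M (i, j)) => /= [->|/negP/negbTE].
apply: bigsetI_measurable => i _; apply: bigsetI_measurable => j _.
case: (M (i, j)); first exact: mle.
by apply: measurableC; exact: mle.
Qed.

Lemma law_Cm_perm (seg : 'I_n -> nat)
  (hseg : forall i j, seg i = seg j -> forall A, measurable A -> P (X i @^-1` A) = P (X j @^-1` A))
  (r s : 'S_n) : (forall i, seg (r i) = seg i) ->
  law (Cm (Mat (r * s)%g)) = law (Cm (Mat s)).
Proof.
move=> hr; rewrite -(@law_perm seg hseg r hr _ (mCm _)); congr (law _).
apply/seteqP; split => v /= H i j.
  have := H ((r^-1)%g i) ((r^-1)%g j).
  by rewrite !sc_perm !ffunE /= !permM !permKV.
by rewrite !sc_perm (H (r i) (r j)) !ffunE /= !permM.
Qed.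

Definition NT : set U := [set v | forall i j, sc v i = sc v j -> i = j].

Lemma NT_big : NT = \big[setI/setT]_(i <- index_enum 'I_n)
   \big[setI/setT]_(j <- index_enum 'I_n | i != j) ~` [set v : U | sc v i = sc v j].
Proof.
apply/seteqP; split => v.
  move=> H; apply/memI => i _ _; apply/memI => j _ ij /= E.
  by move: ij; rewrite (H _ _ E) eqxx.
move/memI => H i j E; apply/eqP; apply/negPn/negP => ij.
by have /memI/(_ j (mem_index_enum _) ij) := H i (mem_index_enum _) isT.
Qed.

Lemma mNT : measurable NT.
Proof.
rewrite NT_big; apply: bigsetI_measurable => i _; apply: bigsetI_measurable => j _.
by apply: measurableC; exact: mtie.
Qed.

Lemma law_nNT : law (~` NT) = 0%E.
Proof.
rewrite NT_big setC_bigsetI.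
have K : forall (s : seq 'I_n) (Q : pred 'I_n) (F : 'I_n -> set U),
    (forall i, Q i -> measurable (F i) /\ law (F i) = 0%E) ->
    measurable (\big[setU/set0]_(i <- s | Q i) F i) /\ law (\big[setU/set0]_(i <- s | Q i) F i) = 0%E.
  move=> s Q F HF; apply: (big_ind (fun A => measurable A /\ law A = 0%E)).
  - by split => //; exact: measure0.
  - by move=> A B [mA A0] [mB B0]; split; [exact: measurableU|exact: null_set_setU].
  - exact: HF.
apply: (K _ _ _ _).2 => i _; rewrite setC_bigsetI.
apply: K => j ij; rewrite setCK; split; first exact: mtie.
exact: tie_null.
Qed.

Lemma law_NT : law NT = 1%E.
Proof.
have E : law (NT `|` ~` NT) = (law NT + law (~` NT))%E.
  apply: measureU; first exact: mNT.
    by apply: measurableC; exact: mNT.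
  by rewrite setICr.
by rewrite law_nNT adde0 setUv lawT in E.
Qed.

Lemma rank_perm v : NT v -> exists s : 'S_n, Cm (Mat s) v.
Proof.
move=> hv.
have H i : (#|[set j | (sc v j < sc v i)%R]%SET| < n)%N.
  rewrite -[X in (_ < X)%N]card_ord -cardsT; apply: proper_card; apply/properP; split.
    exact: finset.subsetT.
  by exists i; rewrite ?inE ?ltxx.
pose f i : 'I_n := Ordinal (H i).
have fmono i j : sc v i < sc v j -> (f i < f j)%N.
  move=> ij; apply: proper_card; apply/properP; split.
    by apply/fintype.subsetP => k; rewrite !inE => /lt_trans; apply.
  by exists i; rewrite !inE ?ltxx.
have finj : injective f.
  move=> i j fij; apply: hv.
  by case: (ltgtP (sc v i) (sc v j)) => // [/fmono|/fmono]; rewrite fij ltnn.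
exists (perm finj) => i j; rewrite ffunE /= !permE.
case: (ltgtP (sc v i) (sc v j)) => [h|h|/hv ->].
- by apply/esym/idP; apply: ltnW; exact: fmono.
- by apply/esym/negbTE; rewrite -ltnNge; exact: fmono.
- by rewrite leqnn.
Qed.

Lemma Cm_NT s : Cm (Mat s) `<=` NT.
Proof.
move=> v H i j E.
have h1 := H i j; have h2 := H j i.
rewrite E lexx !ffunE /= in h1 h2.
apply: (@perm_inj _ s); apply: val_inj; apply/eqP.
by rewrite eqn_leq -h1 -h2.
Qed.

Lemma card_lt_ord (m : nat) : (m <= n)%N -> #|[set k : 'I_n | (k < m)%N]%SET| = m.
Proof.
move=> mn.
have -> : [set k : 'I_n | (k < m)%N]%SET = [set widen_ord mn k | k : 'I_m]%SET.
  apply/finset.setP => k; rewrite !inE; apply/idP/imsetP.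
    by move=> km; exists (Ordinal km) => //; apply: val_inj.
  by case=> k' _ ->; rewrite /= ltn_ord.
by rewrite card_imset ?card_ord //; by move=> x y /(congr1 val) /= /val_inj.
Qed.

Lemma card_lt_perm (s : 'S_n) a : #|[set j | (s j < s a)%N]%SET| = s a.
Proof.
have -> : [set j | (s j < s a)%N]%SET = (s^-1)%g @: [set k : 'I_n | (k < s a)%N]%SET.
  apply/finset.setP => j; rewrite !inE; apply/idP/imsetP.
    by move=> h; exists (s j); rewrite ?inE ?permK.
  by case=> k; rewrite inE => h ->; rewrite permKV.
by rewrite card_imset ?card_lt_ord //; [exact: ltnW|exact: perm_inj].
Qed.

Lemma Mat_inj : injective Mat.
Proof.
move=> s s' E; apply/permP => a; apply: ord_inj.
rewrite -card_lt_perm -[RHS]card_lt_perm; apply: eq_card => j; rewrite !inE.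
have := congr1 (fun M : {ffun _ -> _} => M (a, j)) E; rewrite !ffunE /=.
by rewrite !ltnNge => ->.
Qed.

Lemma Cm_disj s s' : s != s' -> Cm (Mat s) `&` Cm (Mat s') = set0.
Proof.
move=> ss; apply/seteqP; split => // v [H H'].
move/negP: ss; apply; apply/eqP; apply: Mat_inj; apply/ffunP => -[i j].
by rewrite -H -H'.
Qed.

Section Stat.
Context (L : nat) (I : 'I_L -> {set 'I_n}) (Agg : seq nat -> R).

Definition statU (v : U) : 'I_L -> R :=
  fun l => Agg [seq local_rank (I l) (sc v) i | i <- enum (I l)].

Lemma stat_W w : stat_vector S eps X e I Agg w = statU (W w).
Proof.
rewrite /stat_vector /statU.
have -> : score S eps X e w = sc (W w) by apply/funext => i; exact: score_W.
by [].
Qed.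

Definition cmpv (v : U) : {ffun 'I_n * 'I_n -> bool} := [ffun p => sc v p.1 <= sc v p.2].

Definition FM (M : {ffun 'I_n * 'I_n -> bool}) : 'I_L -> R :=
  fun l => Agg [seq #|[set j in I l | M (j, i)]| | i <- enum (I l)].

Lemma statU_FM v : statU v = FM (cmpv v).
Proof.
apply/funext => l; rewrite /statU /FM; congr Agg; apply: eq_map => i.
by rewrite /local_rank; apply: eq_card => j; rewrite !inE ffunE.
Qed.

Lemma Cm_cmpv M v : Cm M v <-> cmpv v = M.
Proof.
split => [H|<-]; first by apply/ffunP => -[i j]; rewrite ffunE H.
by move=> i j; rewrite ffunE.
Qed.

Lemma statU_Cm s v : Cm (Mat s) v -> statU v = Gperm I Agg s.
Proof.
move=> H; apply/funext => l; rewrite /statU /Gperm; congr Agg; apply: eq_map => i.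
by rewrite /local_rank; apply: eq_card => j; rewrite !inE H ffunE.
Qed.

Lemma Gperm_ext (p p' : 'S_n) :
  (forall l i j, i \in I l -> j \in I l -> (p j <= p i)%N = (p' j <= p' i)%N) ->
  Gperm I Agg p = Gperm I Agg p'.
Proof.
move=> H; apply/funext => l; rewrite /Gperm; congr Agg; apply/eq_in_map => i.
rewrite mem_enum => il; apply: eq_card => j; rewrite !inE.
by case jl : (j \in I l) => //=; exact: (H l i j il jl).
Qed.

Lemma memU (I0 : choiceType) (s : seq I0) (Q : pred I0) (F : I0 -> set U) v :
  (\big[setU/set0]_(i <- s | Q i) F i) v <-> (exists i, [/\ i \in s, Q i & F i v]).
Proof.
rewrite -bigcup_seq_cond; split => [[i /andP[si Qi] Fv]|[i [si Qi Fv]]].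
  by exists i.
by exists i => //; rewrite /= si Qi.
Qed.

Lemma law_bigU (I0 : choiceType) (s : seq I0) (Q : pred I0) (F : I0 -> set U) :
  uniq s -> (forall i, measurable (F i)) -> (forall i j, i != j -> F i `&` F j = set0) ->
  law (\big[setU/set0]_(i <- s | Q i) F i) = (\sum_(i <- s | Q i) law (F i))%E.
Proof.
move=> us mF dF; rewrite -big_filter -[RHS]big_filter.
have : uniq (seq.filter Q s) by exact: filter_uniq.
elim: (seq.filter Q s) => [|a t IH].
  by move=> _; rewrite !big_nil; exact: measure0.
case/andP => hat ut; rewrite !big_cons -(IH ut).
apply: measureU => //; first exact: bigsetU_measurable.
apply/seteqP; split => // v [Fa]; rewrite -bigcup_seq => -[i ti Fi].
have ai : a != i by apply: contraNneq hat => ->.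
have : (F a `&` F i) v by [].
by rewrite dF.
Qed.

End Stat.
Arguments statU {L}.
Arguments FM {L}.
Arguments statU_FM {L}.
Arguments statU_Cm {L} I Agg {s v}.
Arguments Gperm_ext {L}.
Arguments stat_W {L}.

Lemma main_law (L : nat) (I : 'I_L -> {set 'I_n}) (Agg : seq nat -> R)
  (seg : 'I_n -> nat)
  (hseg : forall i j, seg i = seg j -> forall A, measurable A -> P (X i @^-1` A) = P (X j @^-1` A))
  (hsegI : forall l i j, i \in I l -> j \in I l -> seg i = seg j)
  (B : set ('I_L -> R)) :
  P [set w | B (stat_vector S eps X e I Agg w)] = uniform_perm_law I Agg B.
Proof.
have -> : [set w | B (stat_vector S eps X e I Agg w)] = W @^-1` [set v | B (statU I Agg v)].
  by apply/seteqP; split => w /=; rewrite stat_W.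
rewrite -lawE.
set Q := [set v | B (statU I Agg v)].
have QE : Q = \big[setU/set0]_(M <- index_enum {ffun 'I_n * 'I_n -> bool} | `[< B (FM I Agg M) >]) Cm M.
  apply/seteqP; split => v.
    move=> Bv; apply/memU; exists (cmpv v); split.
    - exact: mem_index_enum.
    - by apply/asboolP; rewrite -statU_FM.
    - exact/Cm_cmpv.
  move/memU => [M [_ /asboolP BM /Cm_cmpv E]].
  by rewrite /Q /= statU_FM E.
have mQ : measurable Q by rewrite QE; apply: bigsetU_measurable => M _; exact: mCm.
have QNT : Q `&` NT = \big[setU/set0]_(s <- index_enum 'S_n | `[< B (Gperm I Agg s) >]) Cm (Mat s).
  apply/seteqP; split => v.
    move=> [Qv NTv]; have [s Hs] := rank_perm _ NTv; apply/memU; exists s; split.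
    - exact: mem_index_enum.
    - by apply/asboolP; rewrite -(statU_Cm I Agg Hs).
    - exact: Hs.
  move/memU => [s [_ /asboolP Bs Hs]]; split; last exact: Cm_NT Hs.
  by rewrite /Q /= (statU_Cm I Agg Hs).
rewrite (@measureDI _ _ _ law _ _ mQ mNT).
have mQD : measurable (Q `\` NT) by apply: measurableD => //; exact: mNT.
have mCNT : measurable (~` NT) by apply: measurableC; exact: mNT.
have h0 := @subset_measure0 _ _ _ law (Q `\` NT) (~` NT) mQD mCNT (fun v (H : (Q `\` NT) v) => H.2) law_nNT.
rewrite h0.
have mCmM s : measurable (Cm (Mat s)) by exact: mCm.
have disj s s' : s != s' -> Cm (Mat s) `&` Cm (Mat s') = set0 by exact: Cm_disj.
rewrite add0e.
change (law (Q `&` NT) = uniform_perm_law I Agg B).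
rewrite QNT law_bigU //; last exact: index_enum_uniq.
pose pr s := fine (law (Cm (Mat s))).
have prE s : law (Cm (Mat s)) = (pr s)%:E.
  rewrite /pr fineK // ge0_fin_numE ?measure_ge0 //.
  apply: (@le_lt_trans _ _ (law setT)); last by rewrite lawT ltry.
  by apply: le_measure; rewrite ?inE //; exact: mCm.
under eq_bigr do rewrite prE.
rewrite sumEFin /uniform_perm_law; congr EFin.
pose b s := `[< B (Gperm I Agg s) >].
have -> : \sum_(s <- index_enum 'S_n | b s) pr s = \sum_s (b s)%:R * pr s.
  rewrite big_mkcond /=; apply: eq_bigr => s _.
  by case: (b s); rewrite ?mul1r ?mul0r.
have pr1 : \sum_s pr s = 1.
  have NTE : NT = \big[setU/set0]_(s <- index_enum 'S_n | true) Cm (Mat s).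
    apply/seteqP; split => v.
      move=> NTv; have [s Hs] := rank_perm _ NTv; apply/memU; exists s; split => //.
      exact: mem_index_enum.
    by move/memU => [s [_ _ Hs]]; exact: Cm_NT Hs.
  have := law_NT; rewrite NTE law_bigU //; last exact: index_enum_uniq.
  under eq_bigr do rewrite prE.
  by rewrite sumEFin => -[].
have prG r s : inG n seg r -> pr (r * s)%g = pr s.
  move/forallP => hr; rewrite /pr (@law_Cm_perm seg hseg r s) //.
  by move=> i; apply/eqP; exact: hr.
have hc s s' : \sum_(r | inG n seg r) ((b (r * s)%g)%:R : R) = \sum_(r | inG n seg r) (b (r * s')%g)%:R.
  have [t [tseg tord]] := tau_exists n seg s s'.
  rewrite [RHS](reindex_inj (mulIg t)) /=.
  apply: eq_big => r.
    apply/forallP/forallP => h i.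
      by rewrite permM tseg; exact: h.
    by have := h i; rewrite permM tseg.
  move/forallP => hr; rewrite /b (Gperm_ext I Agg (r * s)%g (r * t * s')%g) //.
  move=> l i j il jl; rewrite !permM tord //.
  by rewrite (eqP (hr j)) (eqP (hr i)); exact: hsegI jl il.
rewrite (avg R n seg pr b pr1 prG hc) sum_b_card; congr (_%:R / _).
apply: eq_card => x; rewrite inE; apply/idP/idP => h.
  by rewrite in_setE.
by move: h; rewrite in_setE.
Qed.

End Main.

Theorem theorem2 (R : realType) (dO d : measure_display)
  (Omega : measurableType dO) (P : probability Omega R)
  (Z : measurableType d) (n L : nat)
  (X : 'I_n -> Omega -> Z) (e : 'I_n -> Omega -> R)
  (hX : forall i, measurable_fun [set: Omega] (X i))
  (he : forall i, measurable_fun [set: Omega] (e i))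
  (hind : mutually_independent P X e)
  (hgauss : forall i (A : set R), measurable A ->
     P (e i @^-1` A) = normal_prob 0 1 A)
  (eps : R) (heps : 0 < eps)
  (S : Z -> n.-tuple Z -> R) (hS : symmetric_transformation S)
  (I : 'I_L -> {set 'I_n}) (hI : forall l, I l != finset.set0)
  (Agg : seq nat -> R) :
  (* (i) under H0: Z_1..Z_n i.i.d. with an arbitrary law P1 *)
  (forall P1 : probability Z R,
     (forall i (A : set Z), measurable A -> P (X i @^-1` A) = P1 A) ->
     forall B : set ('I_L -> R),
       P [set w | B (stat_vector S eps X e I Agg w)] = uniform_perm_law I Agg B)
  /\
  (* (ii) changepoint model with no changepoint inside any I_l *)
  (forall (K : nat) (tau : nat -> nat) (Pk : nat -> probability Z R),
     tau 0%N = 0%N -> tau K.+1 = n ->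
     (forall k, (k <= K)%N -> (tau k < tau k.+1)%N) ->
     (forall k, (1 <= k <= K)%N -> (Pk k.+1 : set Z -> \bar R) <> Pk k) ->
     (* Z_i (i in 1..n, i.e. ordinal i has index i+1) has law P_k
        when tau_{k-1} < i+1 <= tau_k *)
     (forall (i : 'I_n) (k : nat), (1 <= k <= K.+1)%N ->
        (tau k.-1 < i.+1 <= tau k)%N ->
        forall A : set Z, measurable A -> P (X i @^-1` A) = Pk k A) ->
     (forall l, exists k, (1 <= k <= K.+1)%N /\
        forall i : 'I_n, i \in I l -> (tau k.-1 < i.+1 <= tau k)%N) ->
     forall B : set ('I_L -> R),
       P [set w | B (stat_vector S eps X e I Agg w)] = uniform_perm_law I Agg B).
Proof.
split.
  move=> P1 hP1 B.
  apply: (@main_law _ _ _ _ P _ n X e hX he hind hgauss eps heps S hS L I Agg (fun _ => 0%N)).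
  - by move=> i j _ A mA; rewrite !hP1.
  - by [].
move=> K tau Pk h0 hK hmono _ hlaw hIl B.
have ex (i : 'I_n) : exists k, (i.+1 <= tau k)%N.
  by exists K.+1; rewrite hK; exact: ltn_ord.
pose seg (i : 'I_n) := ex_minn (ex i).
have mono a b : (a <= b)%N -> (b <= K.+1)%N -> (tau a <= tau b)%N.
  elim: b => [|b IH] ab bK; first by move: ab; rewrite leqn0 => /eqP ->.
  move: ab; rewrite leq_eqVlt => /orP[/eqP -> //|ab].
  apply: (leq_trans (IH ab (ltnW bK))).
  by apply: ltnW; apply: hmono.
have segP (i : 'I_n) : [/\ (1 <= seg i <= K.+1)%N, (tau (seg i).-1 < i.+1)%N & (i.+1 <= tau (seg i))%N].
  rewrite /seg; case: ex_minnP => m Hm Hmin.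
  have m0 : (0 < m)%N.
    by rewrite lt0n; apply/eqP => m0; move: Hm; rewrite m0 h0.
  split => //.
    by rewrite m0 /=; apply: Hmin; rewrite hK; exact: ltn_ord.
  rewrite ltnNge; apply/negP => /Hmin.
  by rewrite leqNgt ltn_predL m0.
have uniq_seg (i : 'I_n) k : (1 <= k <= K.+1)%N -> (tau k.-1 < i.+1 <= tau k)%N -> seg i = k.
  move=> /andP[k1 kK] /andP[lo hi].
  have [/andP[s1 sK] slo shi] := segP i.
  have : (seg i <= k)%N by rewrite /seg; case: ex_minnP => m _ Hmin; exact: Hmin.
  rewrite leq_eqVlt => /orP[/eqP //|lt].
  have : (tau (seg i) <= tau k.-1)%N.
    apply: mono; last by apply: leq_trans kK; exact: leq_pred.
    by rewrite -ltnS (ltn_predK lt).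
  move=> /(leq_trans shi) /(leq_ltn_trans)/(_ lo).
  by rewrite ltnn.
apply: (@main_law _ _ _ _ P _ n X e hX he hind hgauss eps heps S hS L I Agg seg).
- move=> i j sij A mA.
  have [si li hi] := segP i; have [sj lj hj] := segP j.
  have ri : (tau (seg i).-1 < i.+1 <= tau (seg i))%N by rewrite li hi.
  have rj : (tau (seg j).-1 < j.+1 <= tau (seg j))%N by rewrite lj hj.
  by rewrite (hlaw i (seg i) si ri A mA) (hlaw j (seg j) sj rj A mA) sij.
- move=> l i j il jl; have [k [k1 hk]] := hIl l.
  by rewrite (uniq_seg i k k1 (hk i il)) (uniq_seg j k k1 (hk j jl)).
Qed.
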